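(* Let $N\cong\mathbb{Z}^n$ be a lattice and let $\Sigma$ be a complete fan in $N_{\mathbb{Q}}$. Assume there exist rays $\rho_1,\ldots,\rho_n\in\Sigma(1)$ such that their primitive generators $B=\{p_1,\ldots,p_n\}$ form a basis of the lattice $N$ and the primitive generators of all remaining rays in $\Sigma(1)$ are contained in the negative octant of $B$. Then $\rho_1,\ldots,\rho_n$ are the extremal rays of a maximal cone $\sigma\in\Sigma$ (i.e. $\operatorname{Cone}(p_1,\ldots,p_n)\in\Sigma$).
   Context: $\Sigma(1)$ is the set of rays of $\Sigma$; $p_i$ denotes the primitive lattice vector on $\rho_i$. For a finite set $S=\{s_1,\ldots,s_k\}\subset N_{\mathbb{Q}}$, its negative octant is $\{\sum_i a_i s_i:\ a_i\in\mathbb{Q},\ a_i\le 0\}$. *)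

(* Defs.v *)
From HB Require Import structures.
From mathcomp Require Import all_boot all_order all_algebra.
From mathcomp Require Import boolp classical_sets cardinality.
Set Implicit Arguments. Unset Strict Implicit. Unset Printing Implicit Defensive.
Import Order.TTheory GRing.Theory Num.Theory.
Local Open Scope ring_scope.
Local Open Scope classical_set_scope.

Definition NQ (n : nat) := 'rV[rat]_n.
Definition lat (n : nat) := 'rV[int]_n.

Definition toQ (n : nat) (v : lat n) : NQ n := map_mx (fun z : int => z%:~R) v.

(* standard pairing between the dual space and N_Q *)
Definition pairing (n : nat) (u v : NQ n) : rat := \sum_(i < n) u 0 i * v 0 i.

Definition Cone (n : nat) (k : nat) (g : 'I_k -> NQ n) : set (NQ n) :=
  [set v | exists a : 'I_k -> rat,
      (forall i, 0 <= a i) /\ v = \sum_(i < k) a i *: g i].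

Definition rat_poly_cone (n : nat) (C : set (NQ n)) : Prop :=
  exists k (g : 'I_k -> lat n), C = Cone (fun i => toQ (g i)).

Definition strongly_convex (n : nat) (C : set (NQ n)) : Prop :=
  forall v, C v -> C (- v) -> v = 0.

Definition face (n : nat) (tau sigma : set (NQ n)) : Prop :=
  exists u : NQ n, (forall v, sigma v -> 0 <= pairing u v) /\
    tau = [set v | sigma v /\ pairing u v = 0].

Definition fan (n : nat) (Sigma : set (set (NQ n))) : Prop :=
  [/\ finite_set Sigma,
      (forall s, Sigma s -> rat_poly_cone s /\ strongly_convex s),
      (forall s t, Sigma s -> face t s -> Sigma t) &
      (forall s t, Sigma s -> Sigma t -> face (s `&` t) s /\ face (s `&` t) t)].

Definition complete_fan (n : nat) (Sigma : set (set (NQ n))) : Prop :=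
  fan Sigma /\ forall v : NQ n, exists s, Sigma s /\ s v.

Definition is_ray (n : nat) (C : set (NQ n)) : Prop :=
  exists v : NQ n, v != 0 /\ C = Cone (fun _ : 'I_1 => v).

Definition rays (n : nat) (Sigma : set (set (NQ n))) : set (set (NQ n)) :=
  [set rho | Sigma rho /\ is_ray rho].

(* p is the primitive lattice vector on the ray rho: p is a nonzero lattice
   point of rho and every lattice point of rho is a nonnegative integer
   multiple of p (i.e. p generates the semigroup rho ∩ N) *)
Definition primitive_gen (n : nat) (rho : set (NQ n)) (p : lat n) : Prop :=
  [/\ p != 0, rho (toQ p) &
      forall w : lat n, rho (toQ w) -> exists m : nat, w = m%:R *: p].

Definition lattice_basis (n : nat) (p : 'I_n -> lat n) : Prop :=
  forall w : lat n, exists! c : 'I_n -> int, w = \sum_(i < n) c i *: p i.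

Definition neg_octant (n k : nat) (S : 'I_k -> NQ n) : set (NQ n) :=
  [set v | exists a : 'I_k -> rat,
      (forall i, a i <= 0) /\ v = \sum_(i < k) a i *: S i].

Definition maximal_cone (n : nat) (Sigma : set (set (NQ n))) (s : set (NQ n)) :=
  Sigma s /\ forall t, Sigma t -> s `<=` t -> t = s.

(* Main.v *)
Require Import Defs.
From HB Require Import structures.
From mathcomp Require Import all_boot all_order all_algebra.
From mathcomp Require Import boolp classical_sets cardinality.
From mathcomp Require Import ring lra.
Import Order.TTheory GRing.Theory Num.Theory.
Local Open Scope ring_scope.
Local Open Scope classical_set_scope.

Section Aux.
Variable n : nat.
Implicit Types u v w x y : NQ n.

Lemma pairingDr u v w : pairing u (v + w) = pairing u v + pairing u w.
Proof. by rewrite /pairing -big_split; apply: eq_bigr => i _; rewrite mxE mulrDr. Qed.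
Lemma pairingZr u c v : pairing u (c *: v) = c * pairing u v.
Proof. by rewrite /pairing mulr_sumr; apply: eq_bigr => i _; rewrite mxE mulrCA. Qed.
Lemma pairing0r u : pairing u 0 = 0.
Proof. by rewrite /pairing big1 // => i _; rewrite mxE mulr0. Qed.
Lemma pairingNr u v : pairing u (- v) = - pairing u v.
Proof. by rewrite -scaleN1r pairingZr mulN1r. Qed.
Lemma pairingBr u v w : pairing u (v - w) = pairing u v - pairing u w.
Proof. by rewrite pairingDr pairingNr. Qed.
Lemma pairing_sumr u k (F : 'I_k -> NQ n) :
  pairing u (\sum_(i < k) F i) = \sum_(i < k) pairing u (F i).
Proof. exact: (big_morph _ (pairingDr u) (pairing0r u)). Qed.
Lemma pairingDl u v w : pairing (v + w) u = pairing v u + pairing w u.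
Proof. by rewrite /pairing -big_split; apply: eq_bigr => i _; rewrite mxE mulrDl. Qed.
Lemma pairingZl u c v : pairing (c *: v) u = c * pairing v u.
Proof. by rewrite /pairing mulr_sumr; apply: eq_bigr => i _; rewrite mxE mulrA. Qed.
Lemma pairing0l u : pairing 0 u = 0.
Proof. by rewrite /pairing big1 // => i _; rewrite mxE mul0r. Qed.
Lemma pairing_suml u k (F : 'I_k -> NQ n) :
  pairing (\sum_(i < k) F i) u = \sum_(i < k) pairing (F i) u.
Proof. exact: (big_morph _ (fun a b => pairingDl u a b) (pairing0l u)). Qed.
Lemma pairingNl u v : pairing (- v) u = - pairing v u.
Proof. by rewrite -scaleN1r pairingZl mulN1r. Qed.
Lemma pairingBl u v w : pairing (v - w) u = pairing v u - pairing w u.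
Proof. by rewrite pairingDl pairingNl. Qed.

Lemma pairing_self_gt0 v : v != 0 -> 0 < pairing v v.
Proof.
move=> nz; rewrite lt_def; apply/andP; split; last first.
  by rewrite /pairing sumr_ge0 // => i _; rewrite -expr2 sqr_ge0.
apply/eqP => H; move/eqP: nz; apply; apply/matrixP => i j.
rewrite (ord1 i) mxE; apply/eqP; rewrite -sqrf_eq0 expr2; apply/eqP.
by apply: (psumr_eq0P _ H) => // l _; rewrite -expr2 sqr_ge0.
Qed.

Lemma cone0 k (g : 'I_k -> NQ n) : Cone g 0.
Proof. by exists (fun _ => 0); split => //; rewrite big1 // => i _; rewrite scale0r. Qed.

Lemma coneD k (g : 'I_k -> NQ n) x y : Cone g x -> Cone g y -> Cone g (x + y).
Proof.
move=> [a [a0 ->]] [b [b0 ->]]; exists (fun i => a i + b i); split.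
  by move=> i; rewrite addr_ge0.
by rewrite -big_split; apply: eq_bigr => i _; rewrite scalerDl.
Qed.

Lemma coneZ k (g : 'I_k -> NQ n) c x : 0 <= c -> Cone g x -> Cone g (c *: x).
Proof.
move=> c0 [a [a0 ->]]; exists (fun i => c * a i); split.
  by move=> i; rewrite mulr_ge0.
by rewrite scaler_sumr; apply: eq_bigr => i _; rewrite scalerA.
Qed.

Lemma cone_gen k (g : 'I_k -> NQ n) j : Cone g (g j).
Proof.
exists (fun i => (i == j)%:R); split; first by move=> i; rewrite ler0n.
rewrite (bigD1 j) //= eqxx scale1r big1 ?addr0 // => i /negbTE ->.
by rewrite scale0r.
Qed.

Lemma cone_sum k (g : 'I_k -> NQ n) m (F : 'I_m -> NQ n) :
  (forall i, Cone g (F i)) -> Cone g (\sum_(i < m) F i).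
Proof.
move=> H; apply: (big_ind (Cone g)); [exact: cone0 | exact: coneD | by []].
Qed.

Lemma cone_sub k (g : 'I_k -> NQ n) (s : set (NQ n)) :
  (forall x y, s x -> s y -> s (x + y)) -> s 0 ->
  (forall c x, 0 <= c -> s x -> s (c *: x)) ->
  (forall i, s (g i)) -> Cone g `<=` s.
Proof.
move=> sD s0 sZ sg x [a [a0 ->]].
apply: (big_ind s) => // i _; exact: sZ.
Qed.

Lemma cone_pairing_ge0 k (g : 'I_k -> NQ n) u x :
  (forall i, 0 <= pairing u (g i)) -> Cone g x -> 0 <= pairing u x.
Proof.
move=> H [a [a0 ->]]; rewrite pairing_sumr sumr_ge0 // => i _.
by rewrite pairingZr mulr_ge0.
Qed.

Lemma cone1E (x v : NQ n) :
  Cone (fun _ : 'I_1 => x) v <-> exists c, 0 <= c /\ v = c *: x.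
Proof.
split.
  by move=> [a [a0 ->]]; exists (a ord0); split => //; rewrite big_ord1.
by move=> [c [c0 ->]]; exists (fun _ => c); split => //; rewrite big_ord1.
Qed.


Lemma ordS_cases k (i : 'I_k.+1) : i = ord_max \/ exists j : 'I_k, i = widen_ord (leqnSn k) j.
Proof.
case: (ltnP i k) => h; [right; exists (Ordinal h); exact: val_inj | left].
apply: val_inj => /=; have := ltn_ord i; rewrite ltnS => h2; apply/eqP.
by rewrite eqn_leq h h2.
Qed.

Arguments ordS_cases {k}.

Lemma unlift_widen k (j : 'I_k) : unlift ord_max (widen_ord (leqnSn k) j) = Some j.
Proof.
have -> : widen_ord (leqnSn k) j = lift ord_max j by apply: val_inj => /=; rewrite /bump leqNgt ltn_ord.
by rewrite liftK.
Qed.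

Lemma cone_ext k (a : 'I_k.+1 -> NQ n) (l : 'I_k -> rat) (t : rat) b :
  (forall i, 0 <= l i) -> 0 <= t ->
  b = \sum_(i < k) l i *: a (widen_ord (leqnSn k) i) + t *: a ord_max -> Cone a b.
Proof.
move=> l0 x0 ->; exists (fun i => oapp l t (unlift ord_max i)); split.
  by move=> i; case: (unlift ord_max i) => //=.
rewrite big_ord_recr /= unlift_none /=; congr (_ + _).
by apply: eq_bigr => i _; rewrite unlift_widen.
Qed.

Lemma farkas k (a : 'I_k -> NQ n) b :
  ~ Cone a b -> exists y, (forall i, 0 <= pairing y (a i)) /\ pairing y b < 0.
Proof.
elim: k a b => [|k IH] a b nb.
  have bnz : b != 0.
    apply/eqP => b0; apply: nb; rewrite b0; exact: cone0.
  exists (- b); split; first by case.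
  by rewrite pairingNl oppr_lt0 pairing_self_gt0.
set a' := fun i => a (widen_ord (leqnSn k) i); set ak := a ord_max.
have nb' : ~ Cone a' b.
  move=> [l [l0 E]]; apply: nb; apply: (@cone_ext _ _ _ 0 _ l0) => //.
  by rewrite scale0r addr0.
have [y [y0 yb]] := IH a' b nb'.
case: (lerP 0 (pairing y ak)) => hk.
  exists y; split => //; move=> i; case: (ordS_cases i) => [Hi|[j Hj]]; rewrite ?Hi ?Hj //.
  exact: y0.
set c := pairing y ak.
pose a'' := fun i => c *: a' i - pairing y (a' i) *: ak.
pose b'' := c *: b - pairing y b *: ak.
have nb'' : ~ Cone a'' b''.
  move=> [l [l0 E]]; apply: nb.
  pose S := \sum_(i < k) l i *: a' i.
  pose T := \sum_(i < k) l i * pairing y (a' i).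
  have E2 : c *: b - pairing y b *: ak = c *: S - T *: ak.
    rewrite -/b'' E /a'' /S /T scaler_sumr scaler_suml -sumrB.
    apply: eq_bigr => i _; rewrite scalerBr !scalerA; congr (_ - _).
    by rewrite mulrC.
  have T0 : 0 <= T by rewrite sumr_ge0 // => i _; rewrite mulr_ge0.
  apply: (@cone_ext _ _ _ ((T - pairing y b) / (- c)) _ l0).
    by rewrite divr_ge0 // ?oppr_ge0 ?ltW //; lra.
  have cnz : c != 0 by rewrite lt_eqF.
  apply: (scalerI cnz).
  rewrite scalerDr scalerA.
  have -> : c * ((T - pairing y b) / - c) = pairing y b - T.
    by rewrite divrN mulrN mulrCA divff // mulr1 opprB.
  idtac.
  idtac.
  have -> : c *: b = c *: S - T *: ak + pairing y b *: ak by rewrite -E2 subrK.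
  by rewrite scalerBl addrAC addrA.
have [y' [y'0 y'b]] := IH a'' b'' nb''.
exists (c *: y' - pairing y' ak *: y); split.
  move=> i; have [->|[j ->]] := ordS_cases i.
    by rewrite -/ak pairingBl !pairingZl -/c mulrC subrr.
  have := y'0 j; rewrite /a'' pairingBr !pairingZr pairingBl !pairingZl.
  by rewrite -/(a' j) [pairing y (a' j) * _]mulrC.
move: y'b; rewrite /b'' pairingBr !pairingZr pairingBl !pairingZl.
by rewrite [pairing y b * _]mulrC.
Qed.

End Aux.

Section Ext.
Local Set Implicit Arguments.
Local Unset Strict Implicit.
Variable n : nat.

Definition Ext (s : set (NQ n)) (x : NQ n) :=
  x != 0 /\ forall y z, s y -> s z -> y + z = x -> exists c, 0 <= c /\ y = c *: x.

Definition ConeS k (g : 'I_k -> NQ n) (S : {set 'I_k}) : set (NQ n) :=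
  [set v | exists a : 'I_k -> rat, (forall i, 0 <= a i) /\
     (forall i, i \notin S -> a i = 0) /\ v = \sum_(i < k) a i *: g i].

Lemma coneS0 k (g : 'I_k -> NQ n) (S : {set 'I_k}) : ConeS g S 0.
Proof. by exists (fun _ => 0); split => //; split => //; rewrite big1 // => i _; rewrite scale0r. Qed.

Lemma coneSD k (g : 'I_k -> NQ n) (S : {set 'I_k}) x y : ConeS g S x -> ConeS g S y -> ConeS g S (x + y).
Proof.
move=> [a [a0 [aS ->]]] [b [b0 [bS ->]]]; exists (fun i => a i + b i); split.
  by move=> i; rewrite addr_ge0.
split; first by move=> i iS; rewrite aS // bS // addr0.
by rewrite -big_split; apply: eq_bigr => i _; rewrite scalerDl.
Qed.

Lemma coneSZ k (g : 'I_k -> NQ n) (S : {set 'I_k}) c x : 0 <= c -> ConeS g S x -> ConeS g S (c *: x).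
Proof.
move=> c0 [a [a0 [aS ->]]]; exists (fun i => c * a i); split.
  by move=> i; rewrite mulr_ge0.
split; first by move=> i iS; rewrite aS // mulr0.
by rewrite scaler_sumr; apply: eq_bigr => i _; rewrite scalerA.
Qed.

Lemma coneS_gen k (g : 'I_k -> NQ n) (S : {set 'I_k}) j : j \in S -> ConeS g S (g j).
Proof.
move=> jS; exists (fun i => (i == j)%:R); split; first by move=> i; rewrite ler0n.
split; first by move=> i iS; case: eqP => // ij; rewrite ij jS in iS.
rewrite (bigD1 j) //= eqxx scale1r big1 ?addr0 // => i /negbTE ->.
by rewrite scale0r.
Qed.

Lemma coneS_setT k (g : 'I_k -> NQ n) : Cone g `<=` ConeS g [set: 'I_k]%SET.
Proof. by move=> v [a [a0 ->]]; exists a; split => //; split => // i; rewrite finset.in_setT. Qed.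

Lemma sc_pointed (s : set (NQ n)) x y :
  strongly_convex s -> s x -> s y -> x + y = 0 -> x = 0.
Proof.
move=> sc sx sy xy; apply: sc => //; suff -> : - x = y by [].
by apply/eqP; rewrite eq_sym -addr_eq0 addrC xy.
Qed.

Lemma not_coneS_ext k (g : 'I_k -> NQ n) (S : {set 'I_k}) j :
  strongly_convex (Cone g) -> Cone g `<=` ConeS g S -> j \in S ->
  ~ ConeS g (S :\ j) (g j) -> Ext (Cone g) (g j).
Proof.
move=> sc sub jS nC; split.
  by apply/eqP => gj0; apply: nC; rewrite gj0; exact: coneS0.
move=> y z Cy Cz yz.
have [al [al0 [alS Ey]]] := sub _ Cy.
have [be [be0 [beS Ez]]] := sub _ Cz.
pose ga i := al i + be i.
have ga0 i : 0 <= ga i by rewrite addr_ge0.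
pose Rs (f : 'I_k -> rat) := \sum_(i < k | i != j) f i *: g i.
have split_sum (f : 'I_k -> rat) : \sum_(i < k) f i *: g i = f j *: g j + Rs f.
  by rewrite (bigD1 j).
have RsC (f : 'I_k -> rat) : (forall i, 0 <= f i) -> Cone g (Rs f).
  move=> f0; apply: (big_ind (Cone g)); [exact: cone0|exact: coneD|].
  by move=> i _; apply: coneZ => //; exact: cone_gen.
have RsS (f : 'I_k -> rat) : (forall i, 0 <= f i) -> (forall i, i \notin S -> f i = 0) ->
    ConeS g (S :\ j) (Rs f).
  move=> f0 fS; apply: (big_ind (ConeS g (S :\ j))); [exact: coneS0|exact: coneSD|].
  move=> i ij; case: (boolP (i \in S)) => iS.
    by apply: coneSZ => //; apply: coneS_gen; rewrite in_setD1 ij.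
  by rewrite fS // scale0r; exact: coneS0.
have Rga : Rs ga = Rs al + Rs be.
  by rewrite /Rs -big_split; apply: eq_bigr => i _; rewrite scalerDl.
have Egj : g j = ga j *: g j + Rs ga.
  rewrite -(split_sum ga) -yz Ey Ez -big_split; apply: eq_bigr => i _.
  by rewrite scalerDl.
case: (ltrP (ga j) 1) => hr.
  exfalso; apply: nC.
  have -> : g j = (1 - ga j)^-1 *: Rs ga.
    have nz : 1 - ga j != 0 by rewrite subr_eq0 gt_eqF.
    apply: (scalerI nz); rewrite scalerA divff // scale1r scalerBl scale1r.
    by rewrite {1}Egj addrAC subrr add0r.
  apply: coneSZ; first by rewrite invr_ge0 subr_ge0 ltW.
  apply: RsS => // i iS; by rewrite /ga alS // beS // addr0.
exists (al j); split => //.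
have Y0 : Rs al = 0.
  apply: (@sc_pointed (Cone g) _ (Rs be + (ga j - 1) *: g j) sc).
  - exact: RsC.
  - apply: coneD; first exact: RsC.
    by apply: coneZ; [rewrite subr_ge0 | exact: cone_gen].
  rewrite addrA -Rga scalerBl scale1r.
  have -> : Rs ga = g j - ga j *: g j by rewrite {1}Egj addrAC subrr add0r.
  by rewrite addrA subrK subrr.
by rewrite Ey split_sum Y0 addr0.
Qed.

Lemma ext_decomp k (g : 'I_k -> NQ n) :
  strongly_convex (Cone g) -> forall w, Cone g w ->
  exists a : 'I_k -> rat, (forall i, 0 <= a i) /\
    (forall i, a i != 0 -> Ext (Cone g) (g i)) /\ w = \sum_(i < k) a i *: g i.
Proof.
move=> sc.
suff H : forall m (S : {set 'I_k}), (#|S| <= m)%N -> Cone g `<=` ConeS g S ->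
  forall w, Cone g w -> exists a : 'I_k -> rat, (forall i, 0 <= a i) /\
    (forall i, a i != 0 -> Ext (Cone g) (g i)) /\ w = \sum_(i < k) a i *: g i.
  by apply: (H _ [set: 'I_k]%SET) => //; exact: coneS_setT.
elim=> [|m IH] S hS sub w Cw.
  have [a [a0 [aS Ew]]] := sub _ Cw; exists a; split => //; split => // i ai.
  exfalso; move/eqP: ai; apply; apply: aS.
  by move: hS; rewrite leqn0 => /eqP/cards0_eq ->; rewrite finset.in_set0.
case: (pselect (forall i, i \in S -> Ext (Cone g) (g i))) => [allE|nall].
  have [a [a0 [aS Ew]]] := sub _ Cw; exists a; split => //; split => // i ai.
  apply: allE; apply/negPn/negP => iS; by move/eqP: ai; apply; apply: aS.
have [j jS njE] : exists2 j, j \in S & ~ Ext (Cone g) (g j).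
  apply: contrapT => hn; apply: nall => i iS; apply: contrapT => ni.
  by apply: hn; exists i.
have gjS : ConeS g (S :\ j) (g j).
  apply: contrapT => nC; exact: njE (not_coneS_ext sc sub jS nC).
apply: (IH (S :\ j)) => //.
  by move: hS; rewrite (cardsD1 j S) jS add1n ltnS.
move=> v /sub [a [a0 [aS ->]]].
apply: (big_ind (ConeS g (S :\ j))); [exact: coneS0|exact: coneSD|].
move=> i _; case: (boolP (i == j)) => [/eqP -> | ij].
  exact: coneSZ.
case: (boolP (i \in S)) => iS.
  by apply: coneSZ => //; apply: coneS_gen; rewrite in_setD1 ij.
by rewrite aS // scale0r; exact: coneS0.
Qed.

End Ext.

Section Expo.
Variable n : nat.

Lemma exposure k (g : 'I_k -> NQ n) j :
  strongly_convex (Cone g) -> Ext (Cone g) (g j) ->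
  exists u : NQ n, (forall v, Cone g v -> 0 <= pairing u v) /\
    [set v | Cone g v /\ pairing u v = 0] = Cone (fun _ : 'I_1 => g j).
Proof.
move=> sc [gj0 ext].
pose Ray i := exists c, 0 <= c /\ g i = c *: g j.
have each : forall i, exists u : NQ n, (forall m, 0 <= pairing u (g m)) /\
    pairing u (g j) = 0 /\ (Ray i \/ 0 < pairing u (g i)).
  move=> i; case: (pselect (Ray i)) => [r|nr].
    by exists 0; rewrite pairing0l; split => [m|]; rewrite ?pairing0l //; split => //; left.
  pose a : 'I_k.+1 -> NQ n := fun m => oapp g (- g j) (unlift ord_max m).
  have na : ~ Cone a (- g i).
    move=> [l [l0 E]]; move: E; rewrite big_ord_recr /= /a unlift_none /=.
    under eq_bigr => m _ do rewrite unlift_widen /=.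
    set Y := \sum_(m < k) _; set mu := l ord_max => E.
    have CY : Cone g Y.
      by apply: cone_sum => m; apply: coneZ => //; exact: cone_gen.
    have E2 : mu *: g j = g i + Y.
      apply/eqP; rewrite eq_sym -subr_eq0.
      have -> : g i + Y - mu *: g j = g i + (Y + mu *: - g j) by rewrite scalerN addrA.
      by rewrite -E subrr.
    apply: nr; have := l0 ord_max; rewrite -/mu le_eqVlt => /orP [/eqP mu0|mup].
      exists 0; split => //; rewrite scale0r.
      apply: (@sc_pointed n (Cone g) _ Y sc) => //; first exact: cone_gen.
      by rewrite -E2 -mu0 scale0r.
    have mnz : mu != 0 by rewrite gt_eqF.
    have [c [c0 Ec]] : exists c, 0 <= c /\ mu^-1 *: g i = c *: g j.
      apply: (ext _ (mu^-1 *: Y)).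
    - by apply: coneZ; [rewrite invr_ge0 ltW | exact: cone_gen].
    - by apply: coneZ => //; rewrite invr_ge0 ltW.
    - by rewrite -scalerDr -E2 scalerA mulVf // scale1r.
    exists (mu * c); split; first by rewrite mulr_ge0 // ltW.
    by rewrite -scalerA -Ec scalerA divff // scale1r.
  have [y [y0 yb]] := @farkas n _ a (- g i) na.
  have ym m : 0 <= pairing y (g m).
    by have := y0 (widen_ord (leqnSn k) m); rewrite /a unlift_widen.
  exists y; split => //; split.
    apply/eqP; rewrite eq_le ym andbT.
    by have := y0 ord_max; rewrite /a unlift_none /= pairingNr oppr_ge0.
  by right; move: yb; rewrite pairingNr oppr_lt0.
case: (choice each) => f Hf.
exists (\sum_(i < k) f i).
have pE v : pairing (\sum_(i < k) f i) v = \sum_(i < k) pairing (f i) v.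
  exact: pairing_suml.
have pos v : Cone g v -> forall i, 0 <= pairing (f i) v.
  move=> Cv i; apply: (@cone_pairing_ge0 n k g (f i) v _ Cv) => m; by case: (Hf i).
split.
  by move=> v Cv; rewrite pE sumr_ge0 // => i _; exact: pos.
apply/seteqP; split => v.
  move=> [Cv]; have Cv' := Cv; move: Cv' => [a [a0 Ev]].
  rewrite Ev pairing_sumr => H0.
  apply: cone_sum => m.
  have tm : pairing (\sum_(i < k) f i) (a m *: g m) = 0.
    apply: (psumr_eq0P _ H0) => // l _.
    by rewrite pairingZr mulr_ge0 // pE sumr_ge0 // => i _; apply: pos; exact: cone_gen.
  move: tm; rewrite pairingZr => /eqP; rewrite mulf_eq0 => /orP [/eqP -> | /eqP pm].
    by rewrite scale0r; exact: cone0.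
  have fm : pairing (f m) (g m) = 0.
    rewrite pE in pm; apply: (psumr_eq0P _ pm) => // i _; apply: pos; exact: cone_gen.
  have [_ [_ [[c [c0 ->]]|]]] := Hf m; last by rewrite fm ltxx.
  rewrite scalerA; apply/cone1E; exists (a m * c); split => //.
  by rewrite mulr_ge0.
move=> /cone1E [c [c0 ->]]; split.
  by apply: coneZ => //; exact: cone_gen.
rewrite pairingZr pE big1 ?mulr0 // => i _; by case: (Hf i) => _ [].
Qed.

End Expo.

Section Lat.
Variable n : nat.

Lemma toQ_entry (w : lat n) j : toQ w 0 j = (w 0 j)%:~R.
Proof. by rewrite /toQ mxE. Qed.

Lemma toQD (v w : lat n) : toQ (v + w) = toQ v + toQ w.
Proof. by apply/matrixP => i j; rewrite !mxE intrD. Qed.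
Lemma toQ0 : toQ (0 : lat n) = 0.
Proof. by apply/matrixP => i j; rewrite !mxE. Qed.
Lemma toQN (w : lat n) : toQ (- w) = - toQ w.
Proof. by apply/matrixP => i j; rewrite !mxE intrN. Qed.
Lemma toQB (v w : lat n) : toQ (v - w) = toQ v - toQ w.
Proof. by rewrite toQD toQN. Qed.
Lemma toQZ (c : int) (w : lat n) : toQ (c *: w) = c%:~R *: toQ w.
Proof. by apply/matrixP => i j; rewrite !mxE intrM. Qed.
Lemma toQ_sum k (F : 'I_k -> lat n) : toQ (\sum_(i < k) F i) = \sum_(i < k) toQ (F i).
Proof. exact: (big_morph _ toQD toQ0). Qed.
Lemma toQ_inj : injective (@toQ n).
Proof.
move=> v w E; apply/matrixP => i j; move/matrixP: E => /(_ i j); rewrite !mxE.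
by move/eqP; rewrite eqr_int => /eqP.
Qed.
Lemma toQ_eq0 (w : lat n) : (toQ w == 0) = (w == 0).
Proof.
apply/eqP/eqP => [|->]; last exact: toQ0.
by rewrite -toQ0 => /toQ_inj.
Qed.

Lemma absz_lt_rat (a b : int) :
  (`|a|%N < `|b|%N)%N = (`|a%:~R : rat| < `|b%:~R : rat|).
Proof. by rewrite -!intr_norm ltr_int -ltz_nat !abszE. Qed.

Lemma min_primitive (R : set (NQ n)) (gl : lat n) (c0 : 'I_n) (w : lat n) :
  (forall v, R v <-> exists c, 0 <= c /\ v = c *: toQ gl) ->
  w != 0 -> R (toQ w) ->
  (forall w', R (toQ w') -> w' != 0 -> ~ (`|w' 0%R c0| < `|w 0%R c0|)%N) ->
  w 0 c0 != 0 ->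
  primitive_gen R w.
Proof.
move=> RE wnz Rw minw wc0; split => // z Rz.
have [ka [ka0 Ew]] := (RE _).1 Rw.
have [la [la0 Ez]] := (RE _).1 Rz.
have kanz : ka != 0.
  by apply/eqP => k0; move: wnz; rewrite -toQ_eq0 Ew k0 scale0r eqxx.
pose mu := la / ka.
have mu0 : 0 <= mu by rewrite divr_ge0.
have Ez' : toQ z = mu *: toQ w by rewrite Ew scalerA divfK.
pose t := Num.truncn mu.
have /andP [tle tlt] := truncn_itv mu0.
exists t.
pose z' := z - (t%:R : int) *: w.
have Ez2 : toQ z' = (mu - t%:R) *: toQ w.
  by rewrite toQB toQZ Ez' scalerBl; congr (_ - _); rewrite pmulrn intz.
apply/eqP; rewrite -subr_eq0 -/z'; apply/negPn/negP => z'nz.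
have Rz' : R (toQ z').
  apply/RE; exists ((mu - t%:R) * ka); split.
    by rewrite mulr_ge0 // subr_ge0.
  by rewrite Ez2 Ew scalerA.
apply: (minw z' Rz' z'nz); rewrite absz_lt_rat.
have -> : (z' 0 c0)%:~R = (mu - t%:R) * (w 0 c0)%:~R :> rat.
  by rewrite -!toQ_entry Ez2 mxE.
rewrite normrM.
have wc : 0 < `|(w 0 c0)%:~R : rat| by rewrite normr_gt0 intr_eq0.
have d0 : 0 <= mu - t%:R by rewrite subr_ge0.
rewrite ger0_norm // -[X in _ < X]mul1r ltr_pM2r //.
by rewrite ltrBlDr addrC natr1.
Qed.

Lemma prim_exists (R : set (NQ n)) (gl : lat n) :
  gl != 0 -> (forall v, R v <-> exists c, 0 <= c /\ v = c *: toQ gl) ->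
  exists q, primitive_gen R q.
Proof.
move=> glnz RE.
have [c0 gc0] : exists c0, gl 0 c0 != 0.
  apply: contrapT => H; move/eqP: glnz; apply; apply/matrixP => i j.
  rewrite (ord1 i) mxE; apply/eqP; apply: contrapT => nz; apply: H; exists j; exact/negP.
have onR w : R (toQ w) -> w != 0 -> w 0 c0 != 0.
  move=> Rw wnz; have [ka [ka0 Ew]] := (RE _).1 Rw.
  have kanz : ka != 0.
    by apply/eqP => k0; move: wnz; rewrite -toQ_eq0 Ew k0 scale0r eqxx.
  have E := congr1 (fun M : NQ n => M 0 c0) Ew; rewrite /= toQ_entry mxE toQ_entry in E.
  apply/eqP => w0; move: E; rewrite w0 mulr0z => /esym/eqP; rewrite mulf_eq0 (negbTE kanz) /=.
  by rewrite intr_eq0 (negbTE gc0).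
suff H : forall m (w : lat n), (`|w 0%R c0| <= m)%N -> R (toQ w) -> w != 0 ->
    exists q, primitive_gen R q.
  apply: (H _ gl (leqnn _)) => //; apply/RE; exists 1; split => //; by rewrite scale1r.
elim=> [|m IH] w hw Rw wnz.
  by move: (onR w Rw wnz); rewrite -absz_eq0; move: hw; rewrite leqn0 => ->.
case: (pselect (exists w' : lat n, [/\ R (toQ w'), w' != 0 & (`|w' 0%R c0| < `|w 0%R c0|)%N])).
  move=> [w' [Rw' w'nz lt]]; apply: (IH w') => //.
  by rewrite -ltnS; apply: leq_trans hw.
move=> nex; exists w; apply: (@min_primitive R gl c0 w RE wnz Rw); last exact: onR.
by move=> w' Rw' w'nz lt; apply: nex; exists w'.
Qed.

End Lat.

Section Coord.
Variable n : nat.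

Lemma coords (p : 'I_n -> lat n) : lattice_basis p ->
  exists U : 'I_n -> NQ n, forall l m, pairing (U l) (toQ (p m)) = (l == m)%:R.
Proof.
move=> Hb.
have ex k : exists c : 'I_n -> int, delta_mx 0 k = \sum_(i < n) c i *: p i.
  by have [c [Ec _]] := Hb (delta_mx 0 k); exists c.
case: (choice ex) => C HC.
exists (fun l => \row_k ((C k l)%:~R : rat)) => l m.
pose d i := \sum_(k < n) p m 0 k * C k i.
have pd : pairing (\row_k ((C k l)%:~R : rat)) (toQ (p m)) = (d l)%:~R.
  rewrite /pairing /d rmorph_sum; apply: eq_bigr => k _.
  by rewrite !mxE rmorphM mulrC.
have Ed : p m = \sum_(i < n) d i *: p i.
  rewrite {1}(row_sum_delta (p m)).
  under eq_bigr => k _ do rewrite HC scaler_sumr.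
  rewrite exchange_big /=; apply: eq_bigr => i _; rewrite /d scaler_suml.
  by apply: eq_bigr => k _; rewrite scalerA.
have Edel : p m = \sum_(i < n) ((i == m)%:R : int) *: p i.
  rewrite (bigD1 m) //= eqxx scale1r big1 ?addr0 // => i /negbTE ->.
  by rewrite scale0r.
have [c [_ Uc]] := Hb (p m).
have h1 := Uc _ Ed; have h2 := Uc _ Edel.
rewrite pd; have -> : d l = (l == m)%:R by rewrite -(congr1 (fun f => f l) h1) h2.
by case: (l == m).
Qed.

End Coord.

Theorem mainTheorem2 (n : nat) (Sigma : set (set (NQ n)))
    (rho : 'I_n -> set (NQ n)) (p : 'I_n -> lat n) :
  complete_fan Sigma ->
  (forall i, rays Sigma (rho i)) ->
  (forall i, primitive_gen (rho i) (p i)) ->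
  lattice_basis p ->
  (forall (r : set (NQ n)) (q : lat n),
      rays Sigma r -> (forall i, r <> rho i) -> primitive_gen r q ->
      neg_octant (fun i => toQ (p i)) (toQ q)) ->
  maximal_cone Sigma (Cone (fun i => toQ (p i))).
Proof.
move=> [[finS Scone Sface Sint] Scomp] Hrays Hprim Hbasis Hneg.
set sigma := Cone (fun i => toQ (p i)).
pose v := \sum_(i < n) toQ (p i).
have sv : sigma v.
  by exists (fun _ => 1); split => //; apply: eq_bigr => i _; rewrite scale1r.
have [U HU] := @coords n p Hbasis.
have pU l : pairing (U l) v = 1.
  rewrite /v pairing_sumr (bigD1 l) //= HU eqxx big1 ?addr0 // => i /negbTE li.
  by rewrite HU eq_sym li.
have Key : forall s, Sigma s -> s v -> s = sigma.
  move=> s Ss sv'.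
  have [[k [gl Es]] scs] := Scone s Ss.
  rewrite Es in Ss scs sv' *.
  set g := fun i => toQ (gl i).
  have CL : forall i, Ext (Cone g) (g i) ->
      (exists l c, 0 < c /\ g i = c *: toQ (p l)) \/
      neg_octant (fun i => toQ (p i)) (g i).
    move=> i Ei; have [u [u0 Eu]] := @exposure n k g i scs Ei.
    set Rr := Cone (fun _ : 'I_1 => g i).
    have SR : Sigma Rr.
      by apply: (Sface _ _ Ss); exists u; split => //; rewrite Eu.
    have rR : rays Sigma Rr by split => //; exists (g i); split => //; case: Ei.
    case: (pselect (exists l, Rr = rho l)) => [[l El]|nl].
      left; have [pnz rp _] := Hprim l; rewrite -El in rp.
      have [c [c0 Ec]] := (@cone1E n _ _).1 rp.
      have cnz : c != 0.
        by apply/eqP => c00; move: pnz; rewrite -toQ_eq0 Ec c00 scale0r eqxx.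
      exists l, c^-1; split; first by rewrite invr_gt0 lt_def cnz.
      by rewrite Ec scalerA mulVf // scale1r.
    right.
    have glnz : gl i != 0 by rewrite -toQ_eq0; case: Ei.
    have [q Hq] := @prim_exists n Rr (gl i) glnz (fun w => @cone1E n (g i) w).
    have [b [b0 Eb]] := Hneg Rr q rR (fun l E => nl (ex_intro _ l E)) Hq.
    have [_ _ prim] := Hq.
    have [m Em] := prim (gl i) (@cone_gen n 1 _ ord0).
    exists (fun l => ((m%:R : int)%:~R : rat) * b l); split.
      by move=> l; rewrite mulr_ge0_le0 // ler0z ler0n.
    rewrite /g Em toQZ Eb scaler_sumr; apply: eq_bigr => l _.
    by rewrite scalerA.
  have sub1 : sigma `<=` Cone g.
    have Step1 l : Cone g (toQ (p l)).
      have [a [a0 [aE Ev]]] := ext_decomp scs sv'.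
      apply: contrapT => nC.
      have : pairing (U l) v <= 0.
        rewrite Ev pairing_sumr; apply: sumr_le0 => i _; rewrite pairingZr.
        case: (eqVneq (a i) 0) => [-> | anz]; first by rewrite mul0r.
        case: (CL i (aE i anz)) => [[m [c [c0 E]]] | [b [b0 Eb]]].
          have E' : toQ (gl i) = c *: toQ (p m) := E.
          rewrite E' pairingZr HU; case: (eqVneq l m) => [lm | lm].
            exfalso; apply: nC; rewrite lm.
            have -> : toQ (p m) = c^-1 *: g i.
              by rewrite E scalerA mulVf ?scale1r // gt_eqF.
            by apply: coneZ; [rewrite invr_ge0 ltW | exact: cone_gen].
          by rewrite mulr0 mulr0.
        rewrite [toQ (gl i)]Eb pairing_sumr; apply: mulr_ge0_le0 => //.
        apply: sumr_le0 => j _; rewrite pairingZr HU.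
        by apply: mulr_le0_ge0 => //; rewrite ler0n.
      by move=> H; move: (pU l) H => ->; rewrite ler10.
    apply: cone_sub => //; [exact: coneD | exact: cone0 | exact: coneZ].
  apply/seteqP; split => // w Cw.
  have [a [a0 [aE ->]]] := ext_decomp scs Cw.
  apply: cone_sum => i.
  case: (eqVneq (a i) 0) => [-> | anz]; first by rewrite scale0r; exact: cone0.
  case: (CL i (aE i anz)) => [[m [c [c0 E]]] | [b [b0 Eb]]].
    rewrite [toQ (gl i)]E.
    by apply: coneZ => //; apply: coneZ; [exact: ltW | exact: cone_gen].
  exfalso; have [gnz _] := aE i anz; move/eqP: gnz; apply.
  apply: scs; first exact: cone_gen.
  apply: sub1; exists (fun l => - b l); split; first by move=> l; rewrite oppr_ge0.
  rewrite [toQ (gl i)]Eb -sumrN; apply: eq_bigr => l _; by rewrite scaleNr.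
have [s [Ss svv]] := Scomp v.
have Es := Key s Ss svv.
split; first by rewrite -Es.
by move=> t St sub; apply: Key => //; apply: sub.
Qed.
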